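(* Assume conditions (C1), (C2) and (C3) hold and let $\{x_n\},\{w_n\},\{y_n\}$ be generated by Algorithm 3.1. Let $a:=\frac{5+2\varepsilon-\sqrt{8\varepsilon+17}}{2+2\varepsilon}$ (with $\varepsilon$ and $\theta$ from (C3)), and write $[t]_+:=\max\{t,0\}$. Then there exist an integer $N\ge1$ and a constant $M\ge 0$ with $\sum_{k=1}^\infty\|x_{k+1}-x_k\|^2\le M$ such that for every $p\in\Omega$ and every $n\ge N$, $$\min_{N\le i\le n}\|w_i-y_i\|\le\left(\frac{\Big(\|x_N-p\|^2+\frac{a}{1-a}\big[\|x_N-p\|^2-\|x_{N-1}-p\|^2\big]_++\frac{(2+\frac{1-\theta}{4\theta})M}{1-a}\Big)\frac{1}{\theta(1-\mu)}}{n-N+1}\right)^{1/2}.$$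
   Context: Let $H$ be a real Hilbert space, $A:H\to H$ a single-valued mapping and $B:H\to 2^H$ a set-valued mapping, and let $\Omega:=(A+B)^{-1}(0)=\{x\in H:\ 0\in Ax+Bx\}$. Algorithm 3.1 is the following iteration. Fix $x_0,x_1\in H$, $\mu\in(0,1)$, $\lambda_1>0$, real sequences $\{\alpha_n\},\{\beta_n\},\{\theta_n\}$ and nonnegative real sequences $\{\mu_n\},\{p_n\}$. For $n=1,2,\dots$ compute $w_n=x_n+\alpha_n(x_n-x_{n-1})$, $z_n=x_n+\beta_n(x_n-x_{n-1})$, $y_n=(I+\lambda_nB)^{-1}(I-\lambda_nA)w_n$, and set $\lambda_{n+1}=\min\{(\mu_n+\mu)\|w_n-y_n\|/\|Aw_n-Ay_n\|,\ \lambda_n+p_n\}$ if $Aw_n\neq Ay_n$, and $\lambda_{n+1}=\lambda_n+p_n$ otherwise. If $w_n=y_n$ the algorithm stops (then $y_n\in\Omega$). Otherwise set $x_{n+1}=(1-\theta_n)z_n+\theta_n\big(y_n-\lambda_n(Ay_n-Aw_n)\big)$ and continue. Here $I$ is the identity and $(I+\lambda B)^{-1}$ is the resolvent of $B$. Throughout, it is assumed that the algorithm does not stop, so that infinite sequences $\{x_n\},\{w_n\},\{z_n\},\{y_n\},\{\lambda_n\}$ are generated. Condition (C1): $\Omega\neq\emptyset$. Condition (C2): $A$ is $L$-Lipschitz continuous and monotone, and $B$ is maximal monotone. Condition (C3): there is $\varepsilon\in(1,\infty)$ such that (i) $0\le\alpha_n\le1$; (ii) $0\le\beta_n\le\beta_{n+1}\le\beta<\frac{3+2\varepsilon-\sqrt{8\varepsilon+17}}{2\varepsilon}$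 for some constant $\beta$; (iii) $0<\theta<\theta_n\le\theta_{n+1}\le\frac{1}{1+\varepsilon}$ for some constant $\theta$; (iv) $a_n:=(1-\theta_n)\beta_n+\theta_n\alpha_n$ is non-decreasing; (v) $\sum_{n=1}^\infty p_n<\infty$ and $\lim_{n\to\infty}\mu_n=0$. *)

(* Defs.v *)
From HB Require Import structures.
From mathcomp Require Import all_boot all_order all_algebra.
From mathcomp Require Import all_classical all_reals all_analysis.
Set Implicit Arguments. Unset Strict Implicit. Unset Printing Implicit Defensive.
Import Order.TTheory GRing.Theory Num.Theory.
Import numFieldNormedType.Exports.
Local Open Scope classical_set_scope.
Local Open Scope ring_scope.

(* A real Hilbert space is modelled as a complete normed space H over R
   together with an inner product inducing its norm. *)
Definition is_inner_product (R : realType) (H : normedModType R)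
  (ip : H -> H -> R) : Prop :=
  [/\ (forall x y, ip x y = ip y x),
      (forall x y z, ip (x + y) z = ip x z + ip y z),
      (forall (c : R) x y, ip (c *: x) y = c * ip x y) &
      (forall x, ip x x = `|x| ^+ 2)].

Definition monotone_op (R : realType) (H : normedModType R)
  (ip : H -> H -> R) (A : H -> H) : Prop :=
  forall x y, 0 <= ip (A x - A y) (x - y).

Definition monotone_setop (R : realType) (H : normedModType R)
  (ip : H -> H -> R) (B : H -> set H) : Prop :=
  forall x y u v, B x u -> B y v -> 0 <= ip (u - v) (x - y).

Definition maximal_monotone (R : realType) (H : normedModType R)
  (ip : H -> H -> R) (B : H -> set H) : Prop :=
  monotone_setop ip B /\
  forall B' : H -> set H, monotone_setop ip B' ->
    (forall x, B x `<=` B' x) -> forall x, B' x = B x.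

Definition lipschitz_op (R : realType) (H : normedModType R)
  (L : R) (A : H -> H) : Prop :=
  forall x y, `|A x - A y| <= L * `|x - y|.

Definition zeros_sum (R : realType) (H : normedModType R)
  (A : H -> H) (B : H -> set H) : set H :=
  [set x | exists u, B x u /\ A x + u = 0].

(* y = (I + lam B)^{-1} z, i.e. z belongs to y + lam B y *)
Definition resolvent_rel (R : realType) (H : normedModType R)
  (B : H -> set H) (lam : R) (z y : H) : Prop :=
  exists u, B y u /\ z = y + lam *: u.

(* Main.v *)
Require Import Defs.
From HB Require Import structures.
From mathcomp Require Import all_boot all_order all_algebra.
From mathcomp Require Import all_classical all_reals all_analysis.
From mathcomp Require Import ring lra.
Import Order.TTheory GRing.Theory Num.Theory.
Import numFieldNormedType.Exports.
Local Open Scope classical_set_scope.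
Local Open Scope ring_scope.
Set Implicit Arguments. Unset Strict Implicit.
Lemma ipC (R : realType) (H : normedModType R) (ip : H -> H -> R) :
  is_inner_product ip -> forall x y, ip x y = ip y x.
Proof. by case. Qed.
Lemma ipDl (R : realType) (H : normedModType R) (ip : H -> H -> R) :
  is_inner_product ip -> forall x y z, ip (x + y) z = ip x z + ip y z.
Proof. by case. Qed.
Lemma ipZl (R : realType) (H : normedModType R) (ip : H -> H -> R) :
  is_inner_product ip -> forall (c : R) x y, ip (c *: x) y = c * ip x y.
Proof. by case. Qed.
Lemma ipnn (R : realType) (H : normedModType R) (ip : H -> H -> R) :
  is_inner_product ip -> forall x, `|x| ^+ 2 = ip x x.
Proof. by case=> _ _ _ h x; rewrite h. Qed.
Lemma ipDr (R : realType) (H : normedModType R) (ip : H -> H -> R) :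
  is_inner_product ip -> forall x y z, ip x (y + z) = ip x y + ip x z.
Proof. by move=> h x y z; rewrite !(ipC h x) ipDl. Qed.
Lemma ipZr (R : realType) (H : normedModType R) (ip : H -> H -> R) :
  is_inner_product ip -> forall (c : R) x y, ip x (c *: y) = c * ip x y.
Proof. by move=> h c x y; rewrite !(ipC h x) ipZl. Qed.
Lemma ipNl (R : realType) (H : normedModType R) (ip : H -> H -> R) :
  is_inner_product ip -> forall x y, ip (- x) y = - ip x y.
Proof. by move=> h x y; rewrite -scaleN1r ipZl // mulN1r. Qed.
Lemma ipNr (R : realType) (H : normedModType R) (ip : H -> H -> R) :
  is_inner_product ip -> forall x y, ip x (- y) = - ip x y.
Proof. by move=> h x y; rewrite -scaleN1r ipZr // mulN1r. Qed.
Lemma ipBl (R : realType) (H : normedModType R) (ip : H -> H -> R) :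
  is_inner_product ip -> forall x y z, ip (x - y) z = ip x z - ip y z.
Proof. by move=> h x y z; rewrite ipDl // ipNl. Qed.
Lemma ipBr (R : realType) (H : normedModType R) (ip : H -> H -> R) :
  is_inner_product ip -> forall x y z, ip x (y - z) = ip x y - ip x z.
Proof. by move=> h x y z; rewrite ipDr // ipNr. Qed.


Ltac ipexp h := rewrite ?(ipnn h) ?(ipDl h, ipDr h, ipBl h, ipBr h, ipZl h, ipZr h, ipNl h, ipNr h).

Lemma tseng_abs (R : realType) (H : normedModType R) (ip : H -> H -> R) :
  is_inner_product ip -> forall W Y D : H, 0 <= ip D Y ->
  `|W - D| ^+ 2 <= `|W| ^+ 2 - `|W - Y| ^+ 2 + `|D - (W - Y)| ^+ 2.
Proof.
move=> h W Y D hD; ipexp h.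
rewrite (ipC h W D) (ipC h Y W) (ipC h Y D).
lra.
Qed.

Lemma step_abs (R : realType) (H : normedModType R) (ip : H -> H -> R)
  (h : is_inner_product ip) (x0 x1 p v : H) (t al be del E r : R) :
 0 < t -> t < 1 -> 0 <= be -> r * t = 1 - t ->
 `|v - p| ^+ 2 <= `|x1 + al *: (x1 - x0) - p| ^+ 2 - del * E ->
 `|(1 - t) *: (x1 + be *: (x1 - x0)) + t *: v - p| ^+ 2 <=
   (1 + ((1-t)*be + t*al)) * `|x1 - p| ^+ 2 - ((1-t)*be + t*al) * `|x0 - p| ^+ 2
   + ((1-t)*be*(1+be) + t*al*(1+al)) * `|x1 - x0| ^+ 2
   - r * ((1 - be) * `|(1 - t) *: (x1 + be *: (x1 - x0)) + t *: v - x1| ^+ 2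
          + (be^+2 - be) * `|x1 - x0| ^+ 2) - t * del * E.
Proof.
move=> t0 t1 be0 rt hV.
set z := x1 + be *: (x1 - x0).
set xn := (1 - t) *: z + t *: v.
have r0 : 0 <= r by nra.
Ltac symm h x0 x1 p v := rewrite ?(ipC h x1 x0) ?(ipC h p x0) ?(ipC h v x0)
   ?(ipC h p x1) ?(ipC h v x1) ?(ipC h v p).
have E1 : `|xn - p| ^+ 2 = (1-t) * `|z - p| ^+ 2 + t * `|v - p| ^+ 2
   - t * (1-t) * `|v - z| ^+ 2.
  by rewrite /xn /z; ipexp h; symm h x0 x1 p v; ring.
have E2 : `|z - p| ^+ 2 = (1+be) * `|x1 - p| ^+ 2 - be * `|x0 - p| ^+ 2
   + be * (1 + be) * `|x1 - x0| ^+ 2.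
  by rewrite /z; ipexp h; symm h x0 x1 p v; ring.
have E3 : `|x1 + al *: (x1 - x0) - p| ^+ 2 = (1+al) * `|x1 - p| ^+ 2
   - al * `|x0 - p| ^+ 2 + al * (1 + al) * `|x1 - x0| ^+ 2.
  by ipexp h; symm h x0 x1 p v; ring.
have E4 : `|xn - z| ^+ 2 = t ^+ 2 * `|v - z| ^+ 2.
  by rewrite /xn /z; ipexp h; symm h x0 x1 p v; ring.
have E5 : `|xn - z| ^+ 2 = (1 - be) * `|xn - x1| ^+ 2
   + (be ^+ 2 - be) * `|x1 - x0| ^+ 2 + be * `|xn - x1 - (x1 - x0)| ^+ 2.
  by rewrite /xn /z; ipexp h; symm h x0 x1 p v; ring.
have F : t * (1 - t) * `|v - z| ^+ 2 = r * `|xn - z| ^+ 2.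
  by rewrite E4 -rt; ring.
have G : 0 <= r * (be * `|xn - x1 - (x1 - x0)| ^+ 2).
  by apply: mulr_ge0 => //; apply: mulr_ge0.
have hV' : t * `|v - p| ^+ 2 <= t * (`|x1 + al *: (x1 - x0) - p| ^+ 2 - del * E).
  by rewrite ler_wpM2l // ltW.
rewrite E3 in hV'; rewrite E1 E2.
rewrite F E5.
lra.
Qed.
Lemma root_pos (R : realType) (e bb : R) :
  1 < e -> 0 <= bb -> bb < (3 + 2 * e - Num.sqrt (8 * e + 17)) / (2 * e) ->
  0 < e ^+ 2 * (1 - bb) ^+ 2 + e * (1 - 3 * bb) - 2 /\ bb < 1.
Proof.
move=> e1 bb0 hb.
have e0 : 0 < 2 * e by lra.
rewrite ltr_pdivlMr // in hb.
set s := Num.sqrt (8 * e + 17) in hb.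
have s0 : 0 <= s by apply: sqrtr_ge0.
have s2 : s ^+ 2 = 8 * e + 17 by rewrite sqr_sqrtr //; lra.
have s3 : 3 < s by nra.
split; last by nra.
have hA : 0 < 3 + 2 * e - s - bb * (2 * e) by lra.
have hB : 0 < 3 + 2 * e + s - bb * (2 * e) by lra.
have hAB := mulr_gt0 hA hB.
nra.
Qed.

Lemma margin (R : realType) (e bb b b' t t' r r' al' th : R) :
  1 < e -> 0 <= b -> b <= b' -> b' <= bb -> bb < 1 ->
  0 < e ^+ 2 * (1 - bb) ^+ 2 + e * (1 - 3 * bb) - 2 ->
  0 < th -> th < t -> t <= t' -> t' <= 1 / (1 + e) ->
  r * t = 1 - t -> r' * t' = 1 - t' -> 0 <= al' <= 1 ->
  (1 - t') * b' * (1 + b') + t' * al' * (1 + al') + r' * b' * (1 - b')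
  <= r * (1 - b) - th * (e ^+ 2 * (1 - bb) ^+ 2 + e * (1 - 3 * bb) - 2).
Proof.
move=> e1 b0 bb' b'bb bb1 g0 th0 tht tt' t'e rt r't /andP[al0 al1].
set g := e ^+ 2 * (1 - bb) ^+ 2 + e * (1 - 3 * bb) - 2 in g0 *.
have t'0 : 0 < t' by lra.
have t'e' : t' * (1 + e) <= 1 by rewrite -ler_pdivlMr //; lra.
have r'e : e <= r' by nra.
have rr' : r' <= r.
  have : (r - r') * (t * t') = t' - t by rewrite mulrBl; nra.
  move=> hh; have tt0 : 0 < t * t' by nra.
  nra.
have h1 : r' * (1 - b') <= r * (1 - b) by nra.
have h2 : t' * al' * (1 + al') <= 2 * t' by nra.
set f := fun (x y : R) => x ^+ 2 * (1 - y) ^+ 2 + x * (1 - 3 * y) - 2.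
have h3 : r' * (1 - b') ^+ 2 - (1 - t') * b' * (1 + b') - 2 * t' = t' * f r' b'.
  have hh : r' * (1 - b') ^+ 2 - (1 - t') * b' * (1 + b') - 2 * t' - t' * f r' b'
    = (r' * t' - (1 - t')) * ((1 - b') ^+ 2 - r' * (1 - b') ^+ 2 - 1 + 3 * b').
    by rewrite /f; ring.
  by apply/eqP; rewrite -subr_eq0 hh r't subrr mul0r.
have h4 : f r' bb <= f r' b'.
  have : f r' b' - f r' bb = (bb - b') * (r' ^+ 2 * (2 - b' - bb) + 3 * r') by rewrite /f; ring.
  have : 0 <= (bb - b') * (r' ^+ 2 * (2 - b' - bb) + 3 * r').
    apply: mulr_ge0; first lra.
    have : 0 <= r' ^+ 2 * (2 - b' - bb) by apply: mulr_ge0; [rewrite sqr_ge0 | lra].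
    lra.
  lra.
have h5 : g <= f r' bb.
  have : f r' bb - g = (r' - e) * ((r' + e) * (1 - bb) ^+ 2 + 1 - 3 * bb) by rewrite /f /g; ring.
  have k1 : 0 < e * (1 - bb) ^+ 2 + (1 - 3 * bb).
    have : 0 < e * (e * (1 - bb) ^+ 2 + (1 - 3 * bb)) by rewrite /g in g0; nra.
    by rewrite pmulr_rgt0 //; lra.
  have k2 : 0 <= (r' - e) * (1 - bb) ^+ 2 by apply: mulr_ge0; [lra | rewrite sqr_ge0].
  have k3 : 0 <= (r' - e) * ((r' + e) * (1 - bb) ^+ 2 + 1 - 3 * bb).
    apply: mulr_ge0; first lra.
    nra.
  lra.
have h6 : th * g <= t' * f r' b'.
  have : th * g <= t' * g by rewrite ler_wpM2r //; lra.
  have : t' * g <= t' * f r' b' by rewrite ler_wpM2l //; lra.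
  lra.
have h7 : r' * b' * (1 - b') + r' * (1 - b') ^+ 2 = r' * (1 - b') by ring.
lra.
Qed.
Lemma lam_part (R : realType) (H : normedModType R) (A : H -> H) (L mu lam1 : R)
  (mu_ p_ lam : nat -> R) (w y : nat -> H) :
  lipschitz_op L A -> 0 < mu < 1 -> 0 < lam1 ->
  (forall n, 0 <= mu_ n) -> (forall n, 0 <= p_ n) ->
  cvgn (series p_) -> mu_ @ \oo --> (0 : R) -> lam 1%N = lam1 ->
  (forall n, (1 <= n)%N ->
     lam n.+1 = if A (w n) != A (y n)
                then Num.min ((mu_ n + mu) * `|w n - y n| / `|A (w n) - A (y n)|)
                             (lam n + p_ n)
                else lam n + p_ n) ->
  (forall n, (1 <= n)%N -> w n != y n) ->
  (forall n, (1 <= n)%N -> 0 < lam n) /\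
  exists N0, (1 <= N0)%N /\ forall n, (N0 <= n)%N ->
    lam n * `|A (w n) - A (y n)| <= (1 + mu) / 2 * `|w n - y n|.
Proof.
move=> hL /andP[mu0 mu1] l0 hmu hp hcp hmu0 hl1 hrec hwy.
set Mx := Num.max L 1.
have Mx1 : 1 <= Mx by rewrite le_max lexx orbT.
set m := Num.min lam1 (mu / Mx).
have m0 : 0 < m by rewrite lt_min l0 /= divr_gt0 //; lra.
have step_le : forall n, (1 <= n)%N -> lam n.+1 <= lam n + p_ n.
  move=> n n1; rewrite hrec //; case: ifP => _ //; by rewrite ge_min lexx orbT.
have low : forall n, m <= lam n.+1.
  elim=> [|n IH]; first by rewrite hl1 ge_min lexx.
  rewrite hrec //; case: ifPn => hA.
  - rewrite le_min; apply/andP; split; last by have := hp n.+1; lra.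
    have d0 : 0 < `|w n.+1 - y n.+1| by rewrite normr_gt0 subr_eq0 hwy.
    have a0 : 0 < `|A (w n.+1) - A (y n.+1)| by rewrite normr_gt0 subr_eq0.
    have aL : `|A (w n.+1) - A (y n.+1)| <= Mx * `|w n.+1 - y n.+1|.
      apply: (le_trans (hL _ _)); rewrite ler_wpM2r //; by rewrite le_max lexx.
    apply: (@le_trans _ _ (mu / Mx)); first by rewrite ge_min lexx orbT.
    rewrite ler_pdivrMr ?(lt_le_trans ltr01) // mulrAC ler_pdivlMr //.
    have := hmu n.+1; nra.
  - by have := hp n.+1; lra.
have lpos : forall n, (1 <= n)%N -> 0 < lam n.
  by case=> // n _; apply: lt_le_trans (low n).
split => //.
set s := fun n => lam n.+1 - series p_ n.+1.
have sdec : nonincreasing_seq s.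
  apply/nonincreasing_seqP => n; rewrite /s seriesSr.
  by have := step_le n.+1 isT; lra.
have sernd : nondecreasing_seq (series p_).
  by apply/nondecreasing_seqP => n; rewrite seriesSr lerDl.
have slb : has_lbound (range s).
  exists (m - limn (series p_)) => _ [n _ <-]; rewrite /s.
  have := nondecreasing_cvgn_le sernd hcp n.+1; have := low n; lra.
have scv : cvgn s by apply: nonincreasing_is_cvgn.
have lcv : lam @ \oo --> limn s + limn (series p_).
  rewrite -cvg_shiftS.
  have -> : [sequence lam n.+1]_n = s \+ (fun n => series p_ n.+1).
    by apply/funext => n /=; rewrite /s subrK.
  apply: cvgD => //; by rewrite cvg_shiftS.
set l := limn s + limn (series p_) in lcv.
have lm : m <= l.
  rewrite -(cvg_lim _ lcv) //; apply: limr_ge; first by apply/cvg_ex; exists l.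
  by exists 1%N => // n /= n1; case: n n1 => // n _; exact: low.
have l0' : 0 < l by exact: lt_le_trans m0 lm.
set c0 := (1 + mu) / 2.
have gcv : (fun n => c0 * lam n.+1 - lam n * (mu_ n + mu)) @ \oo --> c0 * l - l * (0 + mu).
  apply: cvgB; first by apply: cvgMr; rewrite cvg_shiftS.
  by apply: cvgM => //; apply: cvgD => //; exact: cvg_cst.
have gpos : 0 < c0 * l - l * (0 + mu) by rewrite add0r /c0; nra.
have [N1 _ HN1] := @cvgr_gt _ _ _ _ _ _ gcv 0 gpos.
exists (maxn N1 1); split; first by rewrite leq_maxr.
move=> n; rewrite geq_max => /andP[nN1 n1].
have := HN1 n nN1 => /= hg.
have ln0 := lpos n n1; have ln1 := lpos n.+1 isT.
have d0 : 0 <= `|w n - y n| by [].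
have := hrec n n1; case: ifPn => hA hl.
- have a0 : 0 < `|A (w n) - A (y n)| by rewrite normr_gt0 subr_eq0.
  have : lam n.+1 <= (mu_ n + mu) * `|w n - y n| / `|A (w n) - A (y n)|.
    by rewrite hl ge_min lexx.
  rewrite ler_pdivlMr // => h1.
  have h2 : lam n * (mu_ n + mu) <= c0 * lam n.+1 by lra.
  have h3 : lam n * (lam n.+1 * `|A (w n) - A (y n)|) <=
            lam n * ((mu_ n + mu) * `|w n - y n|) by rewrite ler_wpM2l // ltW.
  have h4 : lam n * (mu_ n + mu) * `|w n - y n| <= c0 * lam n.+1 * `|w n - y n|.
    by rewrite ler_wpM2r.
  have : lam n.+1 * (lam n * `|A (w n) - A (y n)|) <= lam n.+1 * (c0 * `|w n - y n|).
    by nra.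
  by rewrite ler_pM2l.
- move: hA; rewrite negbK => /eqP ->; rewrite subrr normr0 mulr0.
  by apply: mulr_ge0 => //; rewrite /c0; lra.
Qed.

Lemma veq (R : realType) (H : normedModType R) (ip : H -> H -> R) :
  is_inner_product ip -> forall X Y : H, ip (X - Y) (X - Y) = 0 -> X = Y.
Proof.
move=> h X Y; rewrite -(ipnn h) => /eqP; rewrite expf_eq0 /= normr_eq0 subr_eq0.
by move/eqP.
Qed.

Lemma tseng_n (R : realType) (H : normedModType R) (ip : H -> H -> R)
  (A : H -> H) (B : H -> set H) (p0 u0 w y : H) (lam : R) :
  is_inner_product ip -> monotone_op ip A -> maximal_monotone ip B ->
  B p0 u0 -> A p0 + u0 = 0 -> 0 < lam ->
  resolvent_rel B lam (w - lam *: A w) y ->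
  `|y - lam *: (A y - A w) - p0| ^+ 2 <=
    `|w - p0| ^+ 2 - `|w - y| ^+ 2 + lam ^+ 2 * `|A w - A y| ^+ 2.
Proof.
move=> h mA [mB _] Bp0 hp0 l0 [u [Byu he]].
have m1 := mB y p0 u u0 Byu Bp0.
have m2 := mA y p0.
have u0e : u0 = - A p0.
  by apply/eqP; rewrite -addr_eq0 addrC hp0.
have key : w - (y - lam *: (A y - A w)) = lam *: (u + A y).
  have d : w - (y - lam *: (A y - A w)) - lam *: (u + A y)
           = (w - lam *: A w) - (y + lam *: u).
    by apply: (veq h); ipexp h; ring.
  by apply/eqP; rewrite -subr_eq0 d he subrr.
have hD : 0 <= ip (w - (y - lam *: (A y - A w))) (y - p0).
  rewrite key (ipZl h); apply: mulr_ge0; first exact: ltW.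
  have -> : ip (u + A y) (y - p0) = ip (u - u0) (y - p0) + ip (A y - A p0) (y - p0).
    by rewrite u0e; ipexp h; ring.
  exact: addr_ge0.
have T := @tseng_abs _ _ _ h (w - p0) (y - p0) (w - (y - lam *: (A y - A w))) hD.
move: T; ipexp h => T.
ipexp h.
lra.
Qed.


Lemma bigmin_le (R : realType) (F : nat -> R) (x0 : R) (r : seq nat) i :
  i \in r -> \big[Num.min/x0]_(j <- r) F j <= F i.
Proof.
elim: r => // a r IH; rewrite in_cons big_cons => /orP[/eqP ->|hi].
  by rewrite ge_min lexx.
by rewrite ge_min (IH hi) orbT.
Qed.

Lemma bigmin_ge0 (R : realType) (F : nat -> R) (x0 : R) (r : seq nat) :
  0 <= x0 -> (forall i, 0 <= F i) -> 0 <= \big[Num.min/x0]_(j <- r) F j.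
Proof.
move=> h0 hF; apply: (big_ind (fun v => 0 <= v)) => // u v hu hv.
by rewrite le_min hu hv.
Qed.

Lemma rate_final (R : realType) (F : nat -> R) (N n : nat) (S Q : R) :
  (N <= n)%N -> (forall i, 0 <= F i) ->
  \sum_(N <= i < n.+1) F i ^+ 2 <= S -> S <= Q ->
  \big[Num.min/F N]_(N <= i < n.+1) F i <= Num.sqrt (Q / (n - N + 1)%:R).
Proof.
move=> Nn hF hS hSQ.
set mn := \big[Num.min/F N]_(N <= i < n.+1) F i.
have mn0 : 0 <= mn by apply: bigmin_ge0.
have k0 : 0 < (n - N + 1)%:R :> R by rewrite ltr0n addn1.
have hsum : (n - N + 1)%:R * mn ^+ 2 <= \sum_(N <= i < n.+1) F i ^+ 2.
  have : \sum_(N <= i < n.+1) mn ^+ 2 <= \sum_(N <= i < n.+1) F i ^+ 2.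
    rewrite big_nat [X in _ <= X]big_nat; apply: ler_sum => i /andP[Ni iN].
    have hi : mn <= F i by apply: bigmin_le; rewrite mem_index_iota Ni.
    by rewrite !expr2; apply: ler_pM.
  by rewrite mulr_natl sumr_const_nat subSn // addn1.
rewrite -(ger0_norm mn0) -sqrtr_sqr ler_sqrt; last first.
  have s0 : 0 <= \sum_(N <= i < n.+1) F i ^+ 2 by apply: sumr_ge0 => i _; apply: sqr_ge0.
  by apply: divr_ge0; [lra | exact: ltW].
by rewrite ler_pdivlMr //; lra.
Qed.

Lemma a_facts (R : realType) (eps : R) : 1 < eps ->
  0 <= (5 + 2 * eps - Num.sqrt (8 * eps + 17)) / (2 + 2 * eps) /\
  (5 + 2 * eps - Num.sqrt (8 * eps + 17)) / (2 + 2 * eps) < 1.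
Proof.
move=> he; set s := Num.sqrt (8 * eps + 17).
have s0 : 0 <= s by apply: sqrtr_ge0.
have s2 : s ^+ 2 = 8 * eps + 17 by rewrite sqr_sqrtr //; lra.
have e0 : 0 < 2 + 2 * eps by lra.
have hs1 : s < 5 + 2 * eps by nra.
have hs2 : 3 < s by nra.
split; first by apply: divr_ge0; lra.
by rewrite ltr_pdivrMr //; lra.
Qed.

Lemma param_facts (R : realType) (e bb th t b al r : R) :
  1 < e -> 0 < th -> th < t -> t <= 1 / (1 + e) -> 0 <= b -> b <= bb -> bb < 1 ->
  0 <= al <= 1 -> r * t = 1 - t ->
  [/\ 0 <= (1 - t) * b + t * al, (1 - t) * b + t * al <= bb + (1 - bb) / (1 + e)
    & 0 <= (1 - t) * b * (1 + b) + t * al * (1 + al) + r * b * (1 - b)].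
Proof.
move=> he th0 tht te b0 bbb bb1 /andP[al0 al1] rt.
have ie1 : 1 / (1 + e) < 1 by rewrite ltr_pdivrMr; lra.
have t1 : t < 1 by lra.
have r0 : 0 <= r by nra.
split.
- by apply: addr_ge0; apply: mulr_ge0; lra.
- have : t * (1 - bb) <= 1 / (1 + e) * (1 - bb) by rewrite ler_wpM2r //; lra.
  have : (1 - t) * b <= (1 - t) * bb by rewrite ler_wpM2l //; lra.
  have : t * al <= t by rewrite ler_piMr //; lra.
  have -> : (1 - bb) / (1 + e) = 1 / (1 + e) * (1 - bb) by rewrite mulrC mul1r.
  lra.
- have h1 : 0 <= r * b * (1 - b) by apply: mulr_ge0; [apply: mulr_ge0|lra].
  have h2 : 0 <= (1 - t) * b * (1 + b) by apply: mulr_ge0; [apply: mulr_ge0|]; lra.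
  have h3 : 0 <= t * al * (1 + al) by apply: mulr_ge0; [apply: mulr_ge0|]; lra.
  lra.
Qed.

Lemma lyap (R : realType) (phi D E aa cc : nat -> R) (N0 : nat) (sig c abar : R) :
  (1 <= N0)%N -> 0 < sig -> 0 < c -> abar < 1 ->
  (forall k, 0 <= phi k) -> (forall k, 0 <= D k) -> (forall k, 0 <= E k) ->
  (forall k, (1 <= k)%N -> 0 <= aa k <= abar) -> (forall k, (1 <= k)%N -> 0 <= cc k) ->
  (forall n, (N0 <= n)%N ->
     phi n.+1 - aa n.+1 * phi n + cc n.+1 * D n.+1
     <= phi n - aa n * phi n.-1 + cc n * D n - sig * D n.+1 - c * E n) ->
  exists T, 0 <= T /\ forall m, (N0 <= m)%N ->
    \sum_(N0 <= i < m.+1) D i.+1 <= T / sig /\ \sum_(N0 <= i < m.+1) E i <= T / c.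
Proof.
move=> N01 sig0 c0 abar1 phi0 D0 E0 aa_b cc0 descent.
pose Gam k := phi k - aa k * phi k.-1 + cc k * D k.
pose term i := sig * D i.+1 + c * E i.
have term0 : forall i, 0 <= term i.
  move=> i; apply: addr_ge0; apply: mulr_ge0 => //; exact: ltW.
have tele : forall k, Gam (N0 + k)%N.+1 + \sum_(N0 <= i < (N0 + k)%N.+1) term i <= Gam N0.
  elim=> [|k IH].
    by rewrite addn0 big_nat1; have := descent N0 (leqnn _); rewrite /term /Gam; lra.
  rewrite addnS big_nat_recr /=; last by rewrite leqW // leq_addr.
  have hN : (N0 <= (N0 + k)%N.+1)%N by rewrite leqW // leq_addr.
  have := descent (N0 + k)%N.+1 hN.
  move: IH; rewrite /term /Gam; lra.
have Gmon : forall k, Gam (N0 + k)%N <= Gam N0.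
  case=> [|k]; first by rewrite addn0.
  have := tele k; have : 0 <= \sum_(N0 <= i < (N0 + k)%N.+1) term i by apply: sumr_ge0.
  rewrite addnS; lra.
set Bd := Num.max (phi N0.-1) (Num.max (Gam N0) 0 / (1 - abar)).
have Bd0 : 0 <= Bd by rewrite le_max phi0.
have GB : Gam N0 <= (1 - abar) * Bd.
  have : Num.max (Gam N0) 0 / (1 - abar) <= Bd by rewrite le_max lexx orbT.
  rewrite ler_pdivrMr; last by lra.
  have : Gam N0 <= Num.max (Gam N0) 0 by rewrite le_max lexx.
  lra.
have phiB : forall k, phi (N0 + k)%N.-1 <= Bd.
  elim=> [|k IH]; first by rewrite addn0 le_max lexx.
  rewrite addnS /=.
  have k1 : (1 <= N0 + k)%N by rewrite (leq_trans N01) // leq_addr.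
  have /andP[a0 a1] := aa_b _ k1.
  have c0' := cc0 _ k1.
  have hG := Gmon k.
  have p0' := phi0 (N0 + k)%N.-1.
  have d0 := D0 (N0 + k)%N.
  have : cc (N0 + k)%N * D (N0 + k)%N >= 0 by apply: mulr_ge0.
  have : aa (N0 + k)%N * phi (N0 + k)%N.-1 <= abar * Bd.
    apply: (@le_trans _ _ (aa (N0 + k)%N * Bd)); first by rewrite ler_wpM2l.
    by rewrite ler_wpM2r.
  move: hG GB; rewrite /Gam; lra.
exists (Gam N0 + abar * Bd).
have sumB : forall m, (N0 <= m)%N -> \sum_(N0 <= i < m.+1) term i <= Gam N0 + abar * Bd.
  move=> m Nm; have := tele (m - N0)%N; rewrite subnKC //.
  have m1 : (1 <= m.+1)%N by [].
  have /andP[a0 a1] := aa_b _ m1.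
  have c0' := cc0 _ m1.
  have hp := phiB (m - N0)%N.+1; rewrite addnS subnKC // /= in hp.
  have p0' := phi0 m.
  have p1' := phi0 m.+1.
  have d0 := D0 m.+1.
  have : cc m.+1 * D m.+1 >= 0 by apply: mulr_ge0.
  have : aa m.+1 * phi m <= abar * Bd.
    apply: (@le_trans _ _ (aa m.+1 * Bd)); first by rewrite ler_wpM2l.
    by rewrite ler_wpM2r.
  rewrite /Gam /=; lra.
split.
  apply: le_trans (sumB N0 (leqnn _)); apply: sumr_ge0 => i _; exact: term0.
move=> m Nm; have := sumB m Nm; rewrite /term big_split /= -!mulr_sumr => hS.
have h1 : 0 <= \sum_(N0 <= i < m.+1) D i.+1 by apply: sumr_ge0.
have h2 : 0 <= \sum_(N0 <= i < m.+1) E i by apply: sumr_ge0.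
have h3 := mulr_ge0 (ltW sig0) h1.
have h4 := mulr_ge0 (ltW c0) h2.
split; rewrite ler_pdivlMr //; lra.
Qed.

Lemma final_part (R : realType) (H : normedModType R) (A : H -> H) (B : H -> set H)
  (x w y : nat -> H) (N0 : nat) (T1 T2 mu theta a : R) :
  (1 <= N0)%N -> 0 <= T1 -> 0 <= T2 -> 0 < theta -> theta < 1 -> 0 < mu -> mu < 1 ->
  0 <= a -> a < 1 ->
  (forall m, (N0 <= m)%N -> \sum_(N0 <= i < m.+1) `|x i.+1 - x i| ^+ 2 <= T1) ->
  (forall m, (N0 <= m)%N -> \sum_(N0 <= i < m.+1) `|w i - y i| ^+ 2 <= T2) ->
  exists (N : nat) (M : R),
    (1 <= N)%N /\ 0 <= M /\
    (\sum_(1 <= k <oo) ((`|x k.+1 - x k| ^+ 2)%:E) <= M%:E)%E /\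
    forall q, zeros_sum A B q -> forall n, (N <= n)%N ->
      \big[Num.min/`|w N - y N|]_(N <= i < n.+1) `|w i - y i| <=
      Num.sqrt (((`|x N - q| ^+ 2
                 + a / (1 - a) * Num.max (`|x N - q| ^+ 2 - `|x N.-1 - q| ^+ 2) 0
                 + (2 + (1 - theta) / (4 * theta)) * M / (1 - a))
                 * (1 / (theta * (1 - mu))))
                / (n - N + 1)%:R).
Proof.
move=> N01 T10 T20 th0 th1 mu0 mu1 a0 a1 sumD sumE.
set S0 := \sum_(1 <= k < N0) `|x k.+1 - x k| ^+ 2.
have S00 : 0 <= S0 by apply: sumr_ge0 => i _; apply: sqr_ge0.
set M1 := S0 + T1.
have M10 : 0 <= M1 by rewrite /M1; apply: addr_ge0.
set X := 2 + (1 - theta) / (4 * theta).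
have X0 : 0 < X.
  rewrite /X; have : 0 <= (1 - theta) / (4 * theta) by apply: divr_ge0; lra.
  lra.
have ctm0 : 0 < theta * (1 - mu) by apply: mulr_gt0; lra.
set kap := X / (1 - a) * (1 / (theta * (1 - mu))).
have kap0 : 0 < kap.
  by rewrite /kap; apply: mulr_gt0; apply: divr_gt0 => //; lra.
have hkap : kap = X / (1 - a) * (1 / (theta * (1 - mu))) by [].
clearbody kap.
exists N0, (Num.max M1 (T2 / kap)).
split => //.
have MM1 : M1 <= Num.max M1 (T2 / kap) by rewrite le_max lexx.
have MTb : T2 / kap <= Num.max M1 (T2 / kap) by rewrite le_max lexx orbT.
split; first exact: le_trans M10 MM1.
split.
  apply: lime_le.
    by apply: is_cvg_nneseries => k _ _; rewrite lee_fin sqr_ge0.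
  apply: nearW => n /=; rewrite sumEFin lee_fin.
  apply: le_trans MM1.
  have h1 : \sum_(1 <= k < n) `|x k.+1 - x k| ^+ 2 <=
            \sum_(1 <= k < maxn n N0.+1) `|x k.+1 - x k| ^+ 2.
    case: n => [|n]; first by rewrite big_geq //; apply: sumr_ge0 => i _; apply: sqr_ge0.
    rewrite (@big_cat_nat _ _ _ n.+1 1 (maxn n.+1 N0.+1)) //= ?leq_maxl //.
    rewrite lerDl; apply: sumr_ge0 => i _; apply: sqr_ge0.
  have hmx : (N0 <= (maxn n N0.+1).-1)%N.
    by rewrite -ltnS prednK ?leq_maxr // (leq_trans _ (leq_maxr _ _)).
  have hmx' : (maxn n N0.+1).-1.+1 = maxn n N0.+1.
    by rewrite prednK // (leq_trans _ (leq_maxr _ _)).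
  apply: le_trans h1 _.
  rewrite (@big_cat_nat _ _ _ N0 1 (maxn n N0.+1)) //=; last first.
    by apply: leq_trans (leq_maxr _ _).
  rewrite /M1 lerD2l -hmx'.
  exact: sumD.
move=> q _ n Nn.
apply: (@rate_final _ (fun i => `|w i - y i|) N0 n T2) => //.
  exact: (sumE n Nn).
have e1 : forall P MM : R, (P + X * MM / (1 - a)) * (1 / (theta * (1 - mu)))
    = P * (1 / (theta * (1 - mu))) + kap * MM.
  by move=> P MM; rewrite hkap; ring.
rewrite e1.
have P0 : 0 <= (`|x N0 - q| ^+ 2 + a / (1 - a) * Num.max (`|x N0 - q| ^+ 2 - `|x N0.-1 - q| ^+ 2) 0) * (1 / (theta * (1 - mu))).
  apply: mulr_ge0; last by apply: divr_ge0 => //; apply: ltW.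
  apply: addr_ge0; first by apply: sqr_ge0.
  apply: mulr_ge0; first by apply: divr_ge0 => //; lra.
  by rewrite le_max lexx orbT.
have : kap * (T2 / kap) <= kap * Num.max M1 (T2 / kap) by rewrite ler_wpM2l // ltW.
rewrite mulrC divfK ?gt_eqF //.
lra.
Qed.

Unset Implicit Arguments.
Set Strict Implicit.

Theorem theorem3p2 (R : realType) (H : completeNormedModType R)
  (ip : H -> H -> R) (A : H -> H) (B : H -> set H) (L : R)
  (mu lam1 eps beta theta : R)
  (alpha beta_ theta_ mu_ p_ lam : nat -> R) (x w z y : nat -> H) :
  is_inner_product ip ->
  (* (C1) *)
  zeros_sum A B !=set0 ->
  (* (C2) *)
  lipschitz_op L A -> monotone_op ip A -> maximal_monotone ip B ->
  (* parameters *)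
  0 < mu < 1 -> 0 < lam1 ->
  (forall n, 0 <= mu_ n) -> (forall n, 0 <= p_ n) ->
  (* (C3) *)
  1 < eps ->
  (forall n, (1 <= n)%N -> 0 <= alpha n <= 1) ->
  (forall n, (1 <= n)%N -> 0 <= beta_ n /\ beta_ n <= beta_ n.+1) ->
  (forall n, (1 <= n)%N -> beta_ n <= beta) ->
  beta < (3 + 2 * eps - Num.sqrt (8 * eps + 17)) / (2 * eps) ->
  0 < theta ->
  (forall n, (1 <= n)%N ->
     theta < theta_ n /\ theta_ n <= theta_ n.+1 /\
     theta_ n.+1 <= 1 / (1 + eps)) ->
  (forall n, (1 <= n)%N ->
     (1 - theta_ n) * beta_ n + theta_ n * alpha n <=
     (1 - theta_ n.+1) * beta_ n.+1 + theta_ n.+1 * alpha n.+1) ->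
  cvgn (series p_) ->
  mu_ @ \oo --> (0 : R) ->
  (* Algorithm 3.1 *)
  lam 1%N = lam1 ->
  (forall n, (1 <= n)%N -> w n = x n + alpha n *: (x n - x n.-1)) ->
  (forall n, (1 <= n)%N -> z n = x n + beta_ n *: (x n - x n.-1)) ->
  (forall n, (1 <= n)%N -> resolvent_rel B (lam n) (w n - lam n *: A (w n)) (y n)) ->
  (forall n, (1 <= n)%N ->
     lam n.+1 = if A (w n) != A (y n)
                then Num.min ((mu_ n + mu) * `|w n - y n| / `|A (w n) - A (y n)|)
                             (lam n + p_ n)
                else lam n + p_ n) ->
  (* the algorithm does not stop *)
  (forall n, (1 <= n)%N -> w n != y n) ->
  (forall n, (1 <= n)%N ->
     x n.+1 = (1 - theta_ n) *: z n
              + theta_ n *: (y n - lam n *: (A (y n) - A (w n)))) ->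
  let a := (5 + 2 * eps - Num.sqrt (8 * eps + 17)) / (2 + 2 * eps) in
  exists (N : nat) (M : R),
    (1 <= N)%N /\ 0 <= M /\
    (\sum_(1 <= k <oo) ((`|x k.+1 - x k| ^+ 2)%:E) <= M%:E)%E /\
    forall q, zeros_sum A B q -> forall n, (N <= n)%N ->
      \big[Num.min/`|w N - y N|]_(N <= i < n.+1) `|w i - y i| <=
      Num.sqrt (((`|x N - q| ^+ 2
                 + a / (1 - a) * Num.max (`|x N - q| ^+ 2 - `|x N.-1 - q| ^+ 2) 0
                 + (2 + (1 - theta) / (4 * theta)) * M / (1 - a))
                 * (1 / (theta * (1 - mu))))
                / (n - N + 1)%:R).
Proof.
move=> h [p0 [u0 [Bu0 hp0]]] hL mA mB hmu hl1pos hmu_ hp_ he halpha hbeta hbetab hbb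
  th0 htheta ha hcp hmu0 hl1 hw hz hy hlam hwy hx a.
have [lpos [N0 [N01 hN0]]] := lam_part hL hmu hl1pos hmu_ hp_ hcp hmu0 hl1 hlam hwy.
move: hmu => /andP[mu0 mu1].
have beta0 : 0 <= beta by have := hbeta 1%N isT; have := hbetab 1%N isT; lra.
have [g0 bb1] := root_pos he beta0 hbb.
set g := eps ^+ 2 * (1 - beta) ^+ 2 + eps * (1 - 3 * beta) - 2 in g0.
set c0 := (1 + mu) / 2.
set del := 1 - c0 ^+ 2.
have del0 : 0 < del by rewrite /del /c0; nra.
have tht : forall n, (1 <= n)%N ->
   [/\ theta < theta_ n, theta_ n <= theta_ n.+1, theta_ n.+1 <= 1 / (1 + eps)
     & theta_ n <= 1 / (1 + eps)].
  move=> n n1; have [h1 [h2 h3]] := htheta n n1; split => //; exact: le_trans h3.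
have ie1 : 1 / (1 + eps) < 1 by rewrite ltr_pdivrMr; lra.
have ie0 : 0 < 1 / (1 + eps) by rewrite divr_gt0 //; lra.
have tsN : forall n, (N0 <= n)%N ->
  `|y n - lam n *: (A (y n) - A (w n)) - p0| ^+ 2 <=
    `|w n - p0| ^+ 2 - del * `|w n - y n| ^+ 2.
  move=> n nN; have n1 : (1 <= n)%N := leq_trans N01 nN.
  have T := tseng_n h mA mB Bu0 hp0 (lpos n n1) (hy n n1).
  have hl := hN0 n nN.
  have l0 := lpos n n1.
  have a0 : 0 <= lam n * `|A (w n) - A (y n)| by apply: mulr_ge0 => //; exact: ltW.
  have hh : lam n ^+ 2 * `|A (w n) - A (y n)| ^+ 2 <= c0 ^+ 2 * `|w n - y n| ^+ 2.
    by rewrite -!exprMn !expr2; apply: ler_pM.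
  rewrite /del; lra.
clear hN0 lpos hlam hwy hy mA mB hL hmu0 hcp.
pose phi k := `|x k - p0| ^+ 2.
pose D k := `|x k - x k.-1| ^+ 2.
pose E k := `|w k - y k| ^+ 2.
pose aa k := (1 - theta_ k) * beta_ k + theta_ k * alpha k.
pose rr k := (1 - theta_ k) / theta_ k.
pose cc k := (1 - theta_ k) * beta_ k * (1 + beta_ k) + theta_ k * alpha k * (1 + alpha k)
   + rr k * beta_ k * (1 - beta_ k).
set sig := theta * g.
have rrt : forall k, (1 <= k)%N -> rr k * theta_ k = 1 - theta_ k.
  move=> k k1; have [t1 _ _ _] := tht k k1.
  by rewrite /rr divfK // gt_eqF //; apply: lt_trans t1.
have descent : forall n, (N0 <= n)%N ->
  phi n.+1 - aa n.+1 * phi n + cc n.+1 * D n.+1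
  <= phi n - aa n * phi n.-1 + cc n * D n - sig * D n.+1 - (theta * del) * E n.
  move=> n nN; have n1 : (1 <= n)%N := leq_trans N01 nN.
  have [t1 t2 t3 t4] := tht n n1.
  have [b0 b1] := hbeta n n1.
  have b2 := hbetab n.+1 isT.
  have al1 := halpha n.+1 isT.
  have tn0 : 0 < theta_ n by apply: lt_trans t1.
  have tn1 : theta_ n < 1 by apply: le_lt_trans ie1.
  have hV := tsN n nN; rewrite [in w n - p0](hw n n1) in hV.
  have S := @step_abs _ _ _ h (x n.-1) (x n) p0 (y n - lam n *: (A (y n) - A (w n)))
     (theta_ n) (alpha n) (beta_ n) del (E n) (rr n) tn0 tn1 b0
     (rrt n n1) hV.
  rewrite -(hz n n1) -(hx n n1) in S.
  have Mg := margin (e := eps) (r := rr n) (r' := rr n.+1) (al' := alpha n.+1) he b0 b1 b2 bb1 g0 th0 t1 t2 t3 (rrt n n1) (rrt n.+1 isT) al1.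
  have han := ha n n1.
  have phi0 : 0 <= phi n by apply: sqr_ge0.
  have D0 : 0 <= D n.+1 by apply: sqr_ge0.
  have E0 : 0 <= E n by apply: sqr_ge0.
  have P1 : aa n * phi n <= aa n.+1 * phi n by rewrite ler_wpM2r.
  have P2 : cc n.+1 * D n.+1 <= (rr n * (1 - beta_ n) - sig) * D n.+1.
    by rewrite ler_wpM2r.
  have P3 : theta * del * E n <= theta_ n * del * E n.
    by rewrite ler_wpM2r // ler_wpM2r ?ltW.
  move: S P1 P2 P3 Mg; rewrite /phi /D /E /aa /cc /= => S P1 P2 P3 Mg.
  lra.
have sig0 : 0 < sig by rewrite /sig mulr_gt0.
have thd0 : 0 < theta * del by rewrite mulr_gt0.
set abar := beta + (1 - beta) / (1 + eps).
have abar1 : abar < 1.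
  rewrite /abar; have : (1 - beta) / (1 + eps) < 1 - beta.
    by rewrite ltr_pdivrMr; [nra | lra].
  lra.
have pf : forall k, (1 <= k)%N -> [/\ 0 <= aa k, aa k <= abar & 0 <= cc k].
  move=> k k1; have [t1 _ _ t4] := tht k k1; have [b0 _] := hbeta k k1.
  exact: param_facts he th0 t1 t4 b0 (hbetab k k1) bb1 (halpha k k1) (rrt k k1).
have aa_b : forall k, (1 <= k)%N -> 0 <= aa k <= abar.
  by move=> k k1; have [? ? _] := pf k k1; apply/andP.
have cc0 : forall k, (1 <= k)%N -> 0 <= cc k.
  by move=> k k1; have [_ _ ?] := pf k k1.
have [T [T0 hT]] := @lyap _ phi D E aa cc N0 sig (theta * del) abar N01 sig0 thd0 abar1
  (fun k => sqr_ge0 _) (fun k => sqr_ge0 _) (fun k => sqr_ge0 _) aa_b cc0 descent.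
have [a0 a1] := a_facts he.
have th1 : theta < 1 by have [t1 _ _ t4] := tht 1%N isT; lra.
apply: (@final_part _ _ A B x w y N0 (T / sig) (T / (theta * del)) mu theta a) => //.
- by apply: divr_ge0 => //; apply: ltW.
- by apply: divr_ge0 => //; apply: ltW.
- by move=> m Nm; have [h1 _] := hT m Nm.
- by move=> m Nm; have [_ h2] := hT m Nm.
Qed.
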